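(* Let $n\ge1$, $d\ge0$, and let $\mathrm{Sym}_n\subset\mathbb R^{n\times n}$ be the space of symmetric matrices. Consider undirected multigraphs with a directed output pair $H=(V,E,(a,b))$, taken up to isomorphism, with $|V|\le\min\{n,2+2d\}$, $|E|\le d$, and no isolated node in $V\setminus\{a,b\}$. For each such $H$, let $P_H:\mathrm{Sym}_n\to\mathbb R^{n\times n}$ be $P_{H'}$ restricted to $\mathrm{Sym}_n$, where $H'$ is any directed multigraph obtained by orienting each edge of $H$ (this does not depend on the orientation). Then these $P_H$ form a basis of the space of $S_n$-equivariant polynomial maps $\mathrm{Sym}_n\to\mathbb R^{n\times n}$ of degree at most $d$.
   Context: For a directed multigraph with output pair $H'=(V,E,(a,b))$ ($V=[m]$, $E$ a multiset of ordered pairs in $V\times V$ allowing loops and parallel edges, $a,b\in V$ not necessarily distinct and not in $E$), $P_{H'}(X)_{i_a,i_b}=\sum_{j\in[n]^m,\ j_a=i_a,\ j_b=i_b}\prod_{(r,s)\in E}X_{j_r,j_s}$ (with multiplicity; empty product $=1$), with all off-diagonal entries $0$ when $a=b$. An undirected multigraph with directed output pair has $E$ a multiset of unordered pairs $\{r,s\}$ (loops and parallel edges allowed) and an ordered red pair $(a,b)$; isomorphism is a node bijection preserving edge multisets and the ordered red pair. A node is isolated if no edge of $E$ is incident to it. $S_n$ acts on matrices by $(g\cdot X)_{ij}=X_{g^{-1}(i),g^{-1}(j)}$ (preserving $\mathrm{Sym}_n$); $P$ is equivariant if $P(g\cdot X)=g\cdot P(X)$ for all $g\in S_n$. *)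

(* Defs.v *)
From HB Require Import structures.
From mathcomp Require Import all_boot all_order all_algebra all_fingroup.
From mathcomp Require Import reals.
From mathcomp Require Import mpoly.

Set Implicit Arguments.
Unset Strict Implicit.
Unset Printing Implicit Defensive.

Import Order.TTheory GRing.Theory Num.Theory.
Local Open Scope ring_scope.

(* An (edge-oriented) multigraph with output pair on nodes 'I_gm:
   edges are a multiset (seq) of ordered pairs (loops/parallel edges allowed). *)
Record graph := Graph {
  gm : nat;
  gE : seq ('I_gm * 'I_gm);
  ga : 'I_gm;
  gb : 'I_gm }.

Definition und_eq (m : nat) (r s : 'I_m) (e : 'I_m * 'I_m) : bool :=
  ((e.1 == r) && (e.2 == s)) || ((e.1 == s) && (e.2 == r)).

Definition isolated (H : graph) (v : 'I_(gm H)) : bool :=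
  ~~ has (fun e : 'I_(gm H) * 'I_(gm H) => (e.1 == v) || (e.2 == v)) (gE H).

Definition admissible (n d : nat) (H : graph) : Prop :=
  [/\ (gm H <= minn n (2 + 2 * d))%N,
      (size (gE H) <= d)%N &
      forall v : 'I_(gm H), v != ga H -> v != gb H -> ~~ isolated v].

Definition giso (H1 H2 : graph) : Prop :=
  exists sigma : 'I_(gm H1) -> 'I_(gm H2),
    [/\ bijective sigma, sigma (ga H1) = ga H2, sigma (gb H1) = gb H2 &
        forall r s : 'I_(gm H1),
          count (und_eq r s) (gE H1) = count (und_eq (sigma r) (sigma s)) (gE H2)].

(* P_{H'}(X), H' the directed multigraph given by the oriented edges of H *)
Definition Pmap (R : nzRingType) (n : nat) (H : graph) (X : 'M[R]_n) : 'M[R]_n :=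
  \matrix_(i, k)
    (if (ga H == gb H) && (i != k) then 0
     else \sum_(phi : {ffun 'I_(gm H) -> 'I_n} | (phi (ga H) == i) && (phi (gb H) == k))
            \prod_(e <- gE H) X (phi e.1) (phi e.2)).

Definition symmat (R : nzRingType) (n : nat) (X : 'M[R]_n) : Prop := X^T = X.

Definition pact (R : nzRingType) (n : nat) (g : 'S_n) (X : 'M[R]_n) : 'M[R]_n :=
  \matrix_(i, j) X ((g^-1)%g i) ((g^-1)%g j).

(* f : Sym_n -> R^{n x n} (only values on symmat matrices matter) is S_n-equivariant *)
Definition equivariant (R : nzRingType) (n : nat) (f : 'M[R]_n -> 'M[R]_n) : Prop :=
  forall (g : 'S_n) (X : 'M[R]_n), symmat X -> f (pact g X) = pact g (f X).

(* f is, on Sym_n, a polynomial map of degree at most d: every entry is the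
   restriction to Sym_n of a polynomial of total degree <= d in the n*n entries. *)
Definition polymap_le (R : comNzRingType) (n d : nat) (f : 'M[R]_n -> 'M[R]_n) : Prop :=
  forall i j : 'I_n, exists p : mpoly.mpoly (n * n) R,
    (msize p <= d.+1)%N /\
    forall X : 'M[R]_n, symmat X ->
      f X i j = mpoly.meval (fun t : 'I_(n * n) => mxvec X 0 t) p.

(* Main.v *)
Require Import Defs.
From HB Require Import structures.
From mathcomp Require Import all_boot all_order all_algebra all_fingroup.
From mathcomp Require Import reals.
From mathcomp Require Import mpoly.
Set Implicit Arguments.
Unset Strict Implicit.
Unset Printing Implicit Defensive.
Import Order.TTheory GRing.Theory Num.Theory.
Local Open Scope ring_scope.
From mathcomp Require Import zify.
Section Base.
Variable R : realType.
Variable n : nat.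

Definition homV (V : finType) (E : seq (V * V)) (a b : V) (X : 'M[R]_n) : 'M[R]_n :=
  \matrix_(i, k) \sum_(phi : {ffun V -> 'I_n} | (phi a == i) && (phi b == k))
      \prod_(e <- E) X (phi e.1) (phi e.2).

Definition injV (V : finType) (E : seq (V * V)) (a b : V) (X : 'M[R]_n) : 'M[R]_n :=
  \matrix_(i, k) \sum_(phi : {ffun V -> 'I_n} | [&& injectiveb phi, phi a == i & phi b == k])
      \prod_(e <- E) X (phi e.1) (phi e.2).

Lemma Pmap_homV (H : graph) X : Pmap H X = homV (gE H) (ga H) (gb H) X.
Proof.
apply/matrixP => i k; rewrite !mxE.
case: ifP => [/andP[/eqP eab ik]|//].
rewrite big_pred0 // => phi.
rewrite eab; apply/negP => /andP[/eqP e1 /eqP e2].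
by rewrite -e1 -e2 eqxx in ik.
Qed.

Definition emap (V W : finType) (s : V -> W) (E : seq (V * V)) : seq (W * W) :=
  map (fun e => (s e.1, s e.2)) E.

Section Relabel.
Variables (V W : finType) (s : V -> W) (t : W -> V).
Hypotheses (st : cancel s t) (ts : cancel t s).

Definition rel_ff (psi : {ffun W -> 'I_n}) : {ffun V -> 'I_n} := [ffun v => psi (s v)].
Definition rel_ff_inv (phi : {ffun V -> 'I_n}) : {ffun W -> 'I_n} := [ffun w => phi (t w)].

Lemma rel_ff_bij : bijective rel_ff.
Proof.
exists rel_ff_inv => f; apply/ffunP => x; rewrite !ffunE ?st ?ts //.
Qed.

Lemma homV_relabel E a b X : homV E a b X = homV (emap s E) (s a) (s b) X.
Proof.
apply/matrixP => i k; rewrite !mxE.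
rewrite (reindex rel_ff); last by apply: onW_bij; exact: rel_ff_bij.
apply: eq_big => [psi|psi _]; first by rewrite !ffunE.
by rewrite big_map; apply: eq_bigr => e _; rewrite !ffunE.
Qed.

Lemma injectiveb_rel psi : injectiveb (rel_ff psi) = injectiveb psi.
Proof.
apply/injectiveP/injectiveP => h x y.
- move=> e; rewrite -(ts x) -(ts y); congr s; apply: h; by rewrite !ffunE !ts.
- rewrite !ffunE => /h; exact: (can_inj st).
Qed.

Lemma injV_relabel E a b X : injV E a b X = injV (emap s E) (s a) (s b) X.
Proof.
apply/matrixP => i k; rewrite !mxE.
rewrite (reindex rel_ff); last by apply: onW_bij; exact: rel_ff_bij.
apply: eq_big => [psi|psi _]; first by rewrite injectiveb_rel !ffunE.
by rewrite big_map; apply: eq_bigr => e _; rewrite !ffunE.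
Qed.
End Relabel.

End Base.
Section Part1.
Variable R : realType.
Variable n : nat.

Lemma homV_equiv (V : finType) (E : seq (V * V)) a b (g : 'S_n) (X : 'M[R]_n) :
  homV E a b (pact g X) = pact g (homV E a b X).
Proof.
apply/matrixP => i k; rewrite !mxE.
pose h (phi : {ffun V -> 'I_n}) : {ffun V -> 'I_n} := [ffun v => (g^-1)%g (phi v)].
pose h' (phi : {ffun V -> 'I_n}) : {ffun V -> 'I_n} := [ffun v => g (phi v)].
have hK : cancel h h' by move=> f; apply/ffunP => v; rewrite !ffunE permKV.
have h'K : cancel h' h by move=> f; apply/ffunP => v; rewrite !ffunE permK.
rewrite [RHS](reindex h); last by apply: onW_bij; exists h'.
apply: eq_big => [phi|phi _].
  by rewrite !ffunE !(inj_eq (@perm_inj _ _)).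
by apply: eq_bigr => e _; rewrite !mxE !ffunE.
Qed.

Lemma Pmap_equiv (H : graph) : equivariant (@Pmap R n H).
Proof. by move=> g X _; rewrite !Pmap_homV homV_equiv. Qed.

Lemma homV_poly (d : nat) (V : finType) (E : seq (V * V)) a b :
  (size E <= d)%N -> forall i j : 'I_n, exists p : mpoly.mpoly (n * n) R,
    (msize p <= d.+1)%N /\
    forall X : 'M[R]_n, homV E a b X i j = mpoly.meval (fun t : 'I_(n * n) => mxvec X 0 t) p.
Proof.
move=> hE i j.
pose mon (phi : {ffun V -> 'I_n}) : 'X_{1.. n * n} :=
  (\sum_(e <- E) U_(mxvec_index (phi e.1) (phi e.2)))%MM.
exists (\sum_(phi : {ffun V -> 'I_n} | (phi a == i) && (phi b == j)) 'X_[mon phi]).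
split.
  apply: leq_trans (msize_sum _ _ _) _.
  apply/bigmax_leqP => phi _; rewrite msizeX ltnS /mon mdeg_sum.
  rewrite (eq_bigr (fun _ => 1%N)); last by move=> e _; rewrite mdeg1.
  by rewrite sum1_size.
move=> X; rewrite mxE rmorph_sum; apply: eq_bigr => phi _.
rewrite /mon -(big_map (fun e => U_(mxvec_index (phi e.1) (phi e.2)))%MM xpredT idfun).
rewrite -mpolyX_prod rmorph_prod big_map; apply: eq_bigr => e _.
by rewrite /= mevalXU mxvecE.
Qed.

Lemma Pmap_poly (d : nat) (H : graph) : (size (gE H) <= d)%N -> polymap_le d (@Pmap R n H).
Proof.
move=> hE i j; have [p [hp hX]] := @homV_poly d _ (gE H) (ga H) (gb H) hE i j.
by exists p; split => // X _; rewrite Pmap_homV hX.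
Qed.
End Part1.
Section Part2.
Variable R : realType.
Variable n : nat.

Definition nrm (m : nat) (e : 'I_m * 'I_m) : 'I_m * 'I_m :=
  if (e.1 <= e.2)%N then e else (e.2, e.1).

Lemma nrm_eq (m : nat) (e x : 'I_m * 'I_m) :
  (nrm e == x) = ((x.1 <= x.2)%N && und_eq x.1 x.2 e).
Proof.
case: e x => p q [r s]; rewrite /nrm /und_eq /=.
have E1 : forall u v : 'I_m, (u == v) = (nat_of_ord u == nat_of_ord v) by [].
rewrite ?xpair_eqE ?E1.
case: (leqP p q) => hpq /=; rewrite ?xpair_eqE /= ?E1;
 case: (leqP r s) => hrs /=;
 case: (nat_of_ord p =P nat_of_ord r) => epr;
 case: (nat_of_ord q =P nat_of_ord s) => eqs;
 case: (nat_of_ord p =P nat_of_ord s) => eps;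
 case: (nat_of_ord q =P nat_of_ord r) => eqr //=; lia.
Qed.


Lemma count_nrm (m : nat) (E : seq ('I_m * 'I_m)) x :
  count_mem x (map (@nrm m) E) = if (x.1 <= x.2)%N then count (und_eq x.1 x.2) E else 0%N.
Proof.
rewrite count_map; under eq_count => e do rewrite /= nrm_eq.
case: ifP => _ //; exact: count_pred0.
Qed.

Lemma perm_nrm (m : nat) (E1 E2 : seq ('I_m * 'I_m)) :
  (forall r s : 'I_m, count (und_eq r s) E1 = count (und_eq r s) E2) ->
  perm_eq (map (@nrm m) E1) (map (@nrm m) E2).
Proof.
move=> h; apply/allP => x _; apply/eqP; rewrite !count_nrm h //.
Qed.

Lemma prod_nrm (V : finType) (m : nat) (E : seq ('I_m * 'I_m)) (X : 'M[R]_n)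
   (phi : 'I_m -> 'I_n) : symmat X ->
  \prod_(e <- E) X (phi e.1) (phi e.2) = \prod_(e <- map (@nrm m) E) X (phi e.1) (phi e.2).
Proof.
move=> sX; rewrite big_map; apply: eq_bigr => [[p q]] _; rewrite /nrm /=.
case: ifP => // _ /=.
by rewrite -{1}sX mxE.
Qed.

Lemma Pmap_orient (m : nat) (E1 E2 : seq ('I_m * 'I_m)) (a b : 'I_m) :
  (forall r s : 'I_m, count (und_eq r s) E1 = count (und_eq r s) E2) ->
  forall X : 'M[R]_n, symmat X ->
    Pmap (Graph E1 a b) X = Pmap (Graph E2 a b) X.
Proof.
move=> h X sX; rewrite !Pmap_homV /=; apply/matrixP => i k; rewrite !mxE.
apply: eq_bigr => phi _.
rewrite (@prod_nrm 'I_m m E1 X phi sX) (@prod_nrm 'I_m m E2 X phi sX).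
exact: perm_big (perm_nrm h).
Qed.
End Part2.
Section Digits.
Local Open Scope nat_scope.

Lemma digit_sum (B c : nat) (s : seq nat) : size s < B ->
  ((\sum_(x <- s) B ^ x) %/ B ^ c) %% B = count_mem c s.
Proof.
move=> hs; have B0 : 0 < B by case: B hs.
have [hB|hB] := leqP B 1.
  by case: s hs => [|x s] /=; [rewrite big_nil div0n mod0n | move=> h; exfalso; lia].
rewrite (bigID (fun x => x < c)) /=.
set L := \sum_(x <- s | x < c) B ^ x.
have hL : L < B ^ c.
  case: c @L => [|c] L.
    by rewrite /L big_pred0 //= expn0.
  apply: (@leq_ltn_trans (\sum_(x <- s | x < c.+1) B ^ c)).
    by apply: leq_sum => x /= hx; rewrite leq_exp2l.
  rewrite -[X in \sum_(_ <- _ | _) X]mul1n -big_distrl sum1_count /= expnS.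
  rewrite ltn_mul2r expn_gt0 B0 /=.
  exact: leq_ltn_trans (count_size _ _) hs.
have hH : \sum_(x <- s | ~~ (x < c)) B ^ x =
          B ^ c * (count_mem c s + B * \sum_(x <- s | c < x) B ^ (x - c).-1).
  rewrite big_distrr mulnDr /=.
  rewrite (bigID (fun x => x == c)) /=; congr (_ + _).
    rewrite -sum1_count big_distrr /=.
    rewrite (eq_bigl (fun x => x == c)); last first.
      by move=> x; case: eqP => [->|]; rewrite ?ltnn ?andbF ?andbT.
    by apply: eq_bigr => x /eqP ->; rewrite muln1.
  rewrite (eq_bigl (fun x => c < x)); last first.
    by move=> x; rewrite -leqNgt ltn_neqAle eq_sym andbC.
  rewrite big_distrr /=; apply: eq_bigr => x hx.
  by rewrite -expnS prednK ?subn_gt0 // -expnD subnKC // ltnW.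
rewrite hH addnC mulnC divnMDl ?expn_gt0 ?B0 // divn_small // addn0.
by rewrite addnC mulnC modnMDl modn_small //; exact: leq_ltn_trans (count_size _ _) hs.
Qed.

End Digits.
Section Code.
Variable n : nat.

Definition code (p q : 'I_n) : nat := (minn p q * n + maxn p q)%N.

Lemma code_eq (p q p' q' : 'I_n) :
  (code p q == code p' q') = ((p == p') && (q == q')) || ((p == q') && (q == p')).
Proof.
have hm : forall u v : 'I_n, (maxn u v < n)%N by move=> u v; rewrite gtn_max !ltn_ord.
have E1 : forall u v : 'I_n, (u == v) = (nat_of_ord u == nat_of_ord v) by [].
apply/eqP/idP.
  move=> h.
  have h1 := congr1 (fun x => x %/ n)%N h; have h2 := congr1 (fun x => x %% n)%N h.
  have n0 : (0 < n)%N := leq_ltn_trans (leq0n p) (ltn_ord p).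
  rewrite /code /= !divnMDl ?divn_small ?modnMDl ?modn_small //= ?addn0 in h1 h2.
  rewrite !E1; apply/orP.
  case: (nat_of_ord p =P nat_of_ord p') => e1; case: (nat_of_ord q =P nat_of_ord q') => e2;
  case: (nat_of_ord p =P nat_of_ord q') => e3; case: (nat_of_ord q =P nat_of_ord p') => e4;
  rewrite /= ?andbT ?andbF; try lia.
by case/orP => /andP[/eqP -> /eqP ->] //; rewrite /code minnC maxnC.
Qed.

Lemma und_code (m : nat) (psi : 'I_m -> 'I_n) (r s : 'I_m) (e : 'I_m * 'I_m) :
  injective psi ->
  und_eq r s e = (code (psi e.1) (psi e.2) == code (psi r) (psi s)).
Proof. by move=> ipsi; rewrite code_eq !(inj_eq ipsi). Qed.

Definition cnt (m : nat) (psi : 'I_m -> 'I_n) (E : seq ('I_m * 'I_m)) (c : nat) : nat :=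
  count (fun e => code (psi e.1) (psi e.2) == c) E.

Lemma iso_from_count (Hs H : graph) (iota : 'I_(gm Hs) -> 'I_n) (phi : 'I_(gm H) -> 'I_n) :
  injective iota -> (gm H <= gm Hs)%N ->
  (forall v, v != ga Hs -> v != gb Hs -> ~~ isolated v) ->
  phi (ga H) = iota (ga Hs) -> phi (gb H) = iota (gb Hs) ->
  (forall c, cnt phi (gE H) c = cnt iota (gE Hs) c) -> giso H Hs.
Proof.
move=> iinj hm hiso ha hb hc.
have cover : forall w, exists v, phi v = iota w.
  move=> w.
  have [->|naw] := eqVneq w (ga Hs); first by exists (ga H).
  have [->|nbw] := eqVneq w (gb Hs); first by exists (gb H).
  have := hiso w naw nbw; rewrite /isolated negbK => /hasP [es hes hw].
  have : (0 < cnt iota (gE Hs) (code (iota es.1) (iota es.2)))%N.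
    by rewrite -has_count; apply/hasP; exists es.
  rewrite -hc -has_count => /hasP [e he /eqP]; move/eqP; rewrite code_eq.
  case/orP: hw => /eqP <- /orP [] /andP [/eqP h1 /eqP h2];
    by [exists e.1 | exists e.2].
set A := [set phi v | v in 'I_(gm H)].
set Bs := [set iota v | v in 'I_(gm Hs)].
have BA : Bs \subset A.
  apply/subsetP => x /imsetP [w _ ->]; have [v hv] := cover w.
  by apply/imsetP; exists v; rewrite ?inE.
have cB : #|Bs| = gm Hs by rewrite card_imset // card_ord.
have cA : (#|A| <= gm H)%N by rewrite -[X in (_ <= X)%N]card_ord leq_imset_card.
have cAB := subset_leq_card BA.
have eqm : gm H = gm Hs.
  by apply/eqP; rewrite eqn_leq hm /= -cB; apply: leq_trans cAB cA.
have phiinj : injective phi.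
  have : #|A| == #|'I_(gm H)|.
    rewrite card_ord eqn_leq cA /= eqm -cB; exact: cAB.
  move/imset_injP => h x y; exact: h.
have inB : forall v, exists w, phi v = iota w.
  move=> v; have : phi v \in Bs.
    have -> : Bs = A by apply/eqP; rewrite eqEcard BA /= cB -eqm.
    by apply/imsetP; exists v.
  by case/imsetP => w _ ->; exists w.
pose sigma v := odflt (ga Hs) [pick w | iota w == phi v].
have hsig : forall v, iota (sigma v) = phi v.
  move=> v; rewrite /sigma; case: pickP => [w /eqP //|] /= h.
  by have [w hw] := inB v; move: (h w); rewrite hw eqxx.
have siginj : injective sigma.
  by move=> x y e; apply: phiinj; rewrite -!hsig e.
exists sigma; split.
- by apply: inj_card_bij => //; rewrite !card_ord eqm.
- by apply: iinj; rewrite hsig ha.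
- by apply: iinj; rewrite hsig hb.
move=> r s.
rewrite (eq_count (fun e => und_code r s e phiinj)).
rewrite (eq_count (fun e => und_code (sigma r) (sigma s) e iinj)) !hsig.
exact: hc.
Qed.

End Code.
Section Indep.
Variable R : realType.
Variable n d : nat.

Lemma poly_fun0 (p : {poly R}) : (forall t, p.[t] = 0) -> p = 0.
Proof.
move=> h; apply/eqP; apply/negP => /negP hp.
have hr : all (root p) [seq i%:R | i <- iota 0 (size p)].
  by apply/allP => x /mapP [i _ ->]; rewrite /root h.
have hu : uniq [seq i%:R : R | i <- iota 0 (size p)].
  rewrite map_inj_uniq ?iota_uniq // => i j /eqP; rewrite eqr_nat => /eqP //.
have := max_poly_roots hp hr hu.
by rewrite size_map size_iota ltnn.
Qed.

Lemma prod_if (T : Type) (s : seq T) (P : pred T) (f : T -> nat) (t : R) :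
  \prod_(e <- s) (if P e then t ^+ f e else 0) =
  if all P s then t ^+ (\sum_(e <- s) f e)%N else 0.
Proof.
elim: s => [|e s ih]; first by rewrite !big_nil.
rewrite !big_cons ih /=; case: (P e); case: (all P s); rewrite ?mul0r ?mulr0 //.
by rewrite exprD.
Qed.

Lemma indep (k : nat) (G : 'I_k -> graph) (c : 'I_k -> R) :
  (forall i, admissible n d (G i)) ->
  (forall i j, i != j -> ~ giso (G i) (G j)) ->
  (forall X : 'M[R]_n, symmat X -> \sum_(i < k) c i *: Pmap (G i) X = 0) ->
  forall i, c i = 0.
Proof.
move=> adm niso hsum i0; apply/eqP; apply/negP => /negP ci0.
case: (@arg_maxnP _ i0 (fun i => c i != 0) (fun i => gm (G i)) ci0) => ist cis maxis.
set Hs := G ist.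
have [hms hEs hisos] := adm ist.
have hmsn : (gm Hs <= n)%N by apply: leq_trans hms (geq_minl _ _).
pose iota (v : 'I_(gm Hs)) : 'I_n := widen_ord hmsn v.
have iinj : injective iota by move=> x y /(congr1 val) /= /val_inj.
pose B := d.+1.
pose mult (p q : 'I_n) := cnt iota (gE Hs) (code p q).
pose Xt (t : R) : 'M[R]_n := \matrix_(p, q) (if (0 < mult p q)%N then t ^+ (B ^ code p q) else 0).
have codeC : forall p q : 'I_n, code p q = code q p by move=> p q; rewrite /code minnC maxnC.
have sX : forall t, symmat (Xt t).
  by move=> t; apply/matrixP => p q; rewrite !mxE /mult codeC.
pose ia := iota (ga Hs); pose ib := iota (gb Hs).
pose Nst := (\sum_(e <- gE Hs) B ^ code (iota e.1) (iota e.2))%N.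
pose valid j (phi : {ffun 'I_(gm (G j)) -> 'I_n}) :=
  all (fun e => (0 < mult (phi e.1) (phi e.2))%N) (gE (G j)).
pose Nf j (phi : {ffun 'I_(gm (G j)) -> 'I_n}) :=
  (\sum_(e <- gE (G j)) B ^ code (phi e.1) (phi e.2))%N.
pose Q j : {poly R} := \sum_(phi : {ffun 'I_(gm (G j)) -> 'I_n} | (phi (ga (G j)) == ia) && (phi (gb (G j)) == ib))
   (if valid j phi then 'X^(Nf j phi) else 0).
pose P := \sum_(j < k) c j *: Q j.
have P0 : P = 0.
  apply: poly_fun0 => t.
  have := congr1 (fun M : 'M[R]_n => M ia ib) (hsum _ (sX t)).
  rewrite /= summxE mxE => <-.
  rewrite /P horner_sum; apply: eq_bigr => j _.
  rewrite hornerZ mxE Pmap_homV mxE /Q horner_sum; congr (_ * _); apply: eq_bigr => phi _.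
  rewrite (eq_bigr (fun e => if (0 < mult (phi e.1) (phi e.2))%N then t ^+ (B ^ code (phi e.1) (phi e.2)) else 0)); last first.
    by move=> e _; rewrite mxE.
  rewrite prod_if /valid /Nf; case: ifP => _; rewrite ?hornerXn ?horner0 //.
have := congr1 (fun p : {poly R} => p`_Nst) P0.
rewrite /P coef_sum coef0 (bigD1 ist) //= big1 ?addr0; last first.
  move=> j njs; rewrite coefZ.
  have [->|cj] := eqVneq (c j) 0; first by rewrite mul0r.
  rewrite coef_sum big1 ?mulr0 // => phi /andP [/eqP pa /eqP pb].
  case: ifP => vphi; last by rewrite coef0.
  rewrite coefXn; case: eqP => // eN; exfalso.
  apply: (niso j ist njs).
  have [hmj hEj _] := adm j.
  apply: (@iso_from_count n Hs (G j) iota phi iinj (maxis j cj) hisos pa pb).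
  move=> c0.
  have -> : cnt phi (gE (G j)) c0 = count_mem c0 [seq code (phi e.1) (phi e.2) | e <- gE (G j)].
    by rewrite count_map.
  have -> : cnt iota (gE Hs) c0 = count_mem c0 [seq code (iota e.1) (iota e.2) | e <- gE Hs].
    by rewrite count_map.
  have hs1 : (size [seq code (phi e.1) (phi e.2) | e <- gE (G j)] < B)%N by rewrite size_map ltnS.
  have hs2 : (size [seq code (iota e.1) (iota e.2) | e <- gE Hs] < B)%N by rewrite size_map ltnS.
  rewrite -(digit_sum c0 hs1) -(digit_sum c0 hs2) !big_map.
  by rewrite -/(Nf j phi) -eN.
rewrite coefZ coef_sum.
rewrite (eq_bigr (fun phi => ((valid ist phi) && (Nst == Nf ist phi))%:R)); last first.
  by move=> phi _; case: ifP => _; rewrite ?coefXn ?coef0.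
rewrite -natr_sum => /eqP; rewrite mulf_eq0 (negbTE cis) /= pnatr_eq0 => /eqP.
pose phi0 : {ffun 'I_(gm Hs) -> 'I_n} := [ffun v => iota v].
rewrite (bigD1 phi0) /=; last by rewrite !ffunE !eqxx.
have -> : valid ist phi0.
  apply/allP => e he; rewrite !ffunE /mult /cnt -has_count; apply/hasP; exists e => //.
have -> : Nf ist phi0 = Nst by rewrite /Nf /Nst; apply: eq_bigr => e _; rewrite !ffunE.
by rewrite eqxx.
Qed.
End Indep.
Section Span.
Variable R : realType.
Variable n d : nat.

Definition inspan (F : 'M[R]_n -> 'M[R]_n) : Prop :=
  exists (k : nat) (G : 'I_k -> graph) (c : 'I_k -> R),
    (forall i, admissible n d (G i)) /\
    forall X : 'M[R]_n, symmat X -> F X = \sum_(i < k) c i *: Pmap (G i) X.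

Lemma span_ext F F' : (forall X, symmat X -> F X = F' X) -> inspan F -> inspan F'.
Proof.
move=> h [k [G [c [hG hF]]]]; exists k, G, c; split => // X sX; by rewrite -h ?hF.
Qed.

Lemma span0 : inspan (fun _ => 0).
Proof.
exists 0%N; exists (fun _ => @Graph 1 [::] ord0 ord0).
exists (fun _ => 0); split; first by case.
by move=> X _; rewrite big_ord0.
Qed.

Lemma span_graph H : admissible n d H -> inspan (@Pmap R n H).
Proof.
move=> hH; exists 1%N, (fun _ => H), (fun _ => 1); split => // X _.
by rewrite big_ord1 scale1r.
Qed.

Lemma spanZ F (a : R) : inspan F -> inspan (fun X => a *: F X).
Proof.
move=> [k [G [c [hG hF]]]]; exists k, G, (fun i => a * c i); split => // X sX.
by rewrite hF // scaler_sumr; apply: eq_bigr => i _; rewrite scalerA.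
Qed.

Lemma spanD F F' : inspan F -> inspan F' -> inspan (fun X => F X + F' X).
Proof.
move=> [k [G [c [hG hF]]]] [k' [G' [c' [hG' hF']]]].
exists (k + k')%N.
exists (fun i => match split i with inl j => G j | inr j => G' j end).
exists (fun i => match split i with inl j => c j | inr j => c' j end).
split.
  by move=> i; case: (split i).
move=> X sX; rewrite big_split_ord /= hF // hF'//.
congr (_ + _); apply: eq_bigr => i _.
  by have := unsplitK (inl i : 'I_k + 'I_k'); rewrite /= => ->.
by have := unsplitK (inr i : 'I_k + 'I_k'); rewrite /= => ->.
Qed.

Lemma spanN F : inspan F -> inspan (fun X => - F X).
Proof.
move=> h; apply: span_ext (spanZ (-1) h) => X _; by rewrite scaleN1r.
Qed.

Lemma spanB F F' : inspan F -> inspan F' -> inspan (fun X => F X - F' X).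
Proof. by move=> h h'; apply: spanD => //; apply: spanN. Qed.

Lemma span_sum (I : Type) (r : seq I) (P : pred I) (F : I -> 'M[R]_n -> 'M[R]_n) :
  (forall i, P i -> inspan (F i)) -> inspan (fun X => \sum_(i <- r | P i) F i X).
Proof.
move=> h; elim: r => [|i r ih].
  by apply: span_ext span0 => X _; rewrite big_nil.
case hi: (P i).
  apply: span_ext (spanD (h i hi) ih) => X _; by rewrite big_cons hi.
by apply: span_ext ih => X _; rewrite big_cons hi.
Qed.

End Span.
Section Iso.
Variable R : realType.
Variable n d : nat.
Variable V : finType.
Variables (E : seq (V * V)) (a b : V).

Definition keep (v : V) : bool :=
  [|| v == a, v == b | has (fun e : V * V => (e.1 == v) || (e.2 == v)) E].
Definition Vk := {v : V | keep v}.
Definition Vn := {v : V | ~~ keep v}.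
Lemma keepa : keep a. Proof. by rewrite /keep eqxx. Qed.
Lemma keepb : keep b. Proof. by rewrite /keep eqxx orbT. Qed.
Definition ak : Vk := exist _ a keepa.
Definition bk : Vk := exist _ b keepb.
Definition projk (v : V) : Vk := insubd ak v.
Definition Ek : seq (Vk * Vk) := emap projk E.

Lemma keep_e1 e : e \in E -> keep e.1.
Proof. by move=> he; rewrite /keep; apply/orP; right; apply/orP; right; apply/hasP; exists e; rewrite ?eqxx. Qed.
Lemma keep_e2 e : e \in E -> keep e.2.
Proof. by move=> he; rewrite /keep; apply/orP; right; apply/orP; right; apply/hasP; exists e; rewrite ?eqxx ?orbT. Qed.

Lemma projkK v : keep v -> val (projk v) = v.
Proof. by move=> kv; rewrite /projk insubdK. Qed.

Definition hsplit (p : {ffun Vk -> 'I_n} * {ffun Vn -> 'I_n}) : {ffun V -> 'I_n} :=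
  [ffun v => if (insub v : option Vk) is Some w then p.1 w
             else if (insub v : option Vn) is Some u then p.2 u else p.1 ak].
Definition gsplit (phi : {ffun V -> 'I_n}) : {ffun Vk -> 'I_n} * {ffun Vn -> 'I_n} :=
  ([ffun w : Vk => phi (val w)], [ffun u : Vn => phi (val u)]).

Lemma hsplit_bij : bijective hsplit.
Proof.
exists gsplit.
  move=> [p1 p2]; rewrite /gsplit; congr (_, _); apply/ffunP => w; rewrite !ffunE.
    by rewrite valK.
  have -> : (insub (val w) : option Vk) = None by apply: insubF; apply/negbTE; exact: (valP w).
  by rewrite valK.
move=> phi; apply/ffunP => v; rewrite !ffunE.
case: insubP => [w _ <-|kv]; first by rewrite ffunE.
by case: insubP => [u _ <-|]; [rewrite ffunE | rewrite kv].
Qed.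

Lemma hsplit_k p v : keep v -> hsplit p v = p.1 (projk v).
Proof.
move=> kv; rewrite ffunE /projk (insubT _ kv) /insubd (insubT _ kv) //.
Qed.

Lemma homV_keep (X : 'M[R]_n) :
  homV E a b X = (#|{: {ffun Vn -> 'I_n}}|)%:R *: homV Ek ak bk X.
Proof.
apply/matrixP => i k; rewrite !mxE.
rewrite (reindex hsplit); last by apply: onW_bij; exact: hsplit_bij.
rewrite (eq_bigr (fun p : {ffun Vk -> 'I_n} * {ffun Vn -> 'I_n} => \prod_(e <- Ek) X (p.1 e.1) (p.1 e.2))); last first.
  move=> p _; rewrite big_map big_seq [RHS]big_seq; apply: eq_bigr => e he.
  by rewrite !hsplit_k ?keep_e1 ?keep_e2.
rewrite (eq_bigl (fun p : {ffun Vk -> 'I_n} * {ffun Vn -> 'I_n} => ((p.1 ak == i) && (p.1 bk == k)) && true)); last first.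
  move=> p; rewrite !hsplit_k ?keepa ?keepb ?andbT //.
  by rewrite /projk /insubd (insubT _ keepa) (insubT _ keepb).
rewrite -(pair_big (fun p1 : {ffun Vk -> 'I_n} => (p1 ak == i) && (p1 bk == k)) xpredT
   (fun p1 _ => \prod_(e <- Ek) X (p1 e.1) (p1 e.2))) /=.
rewrite mulr_sumr; apply: eq_bigr => p1 _.
by rewrite sumr_const mulr_natl.
Qed.


Definition Gk : graph := @Graph #|{: Vk}| (emap enum_rank Ek) (enum_rank ak) (enum_rank bk).

Lemma homV_Gk (X : 'M[R]_n) : homV Ek ak bk X = Pmap Gk X.
Proof.
rewrite Pmap_homV /=; exact: (homV_relabel (@enum_rankK _) (@enum_valK _)).
Qed.

Lemma adm_Gk : (#|V| <= n)%N -> (size E <= d)%N -> admissible n d Gk.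
Proof.
move=> hV hE; split => /=.
- rewrite leq_min; apply/andP; split.
    by apply: leq_trans hV; rewrite card_sig; exact: max_card.
  pose s := a :: b :: (map fst E ++ map snd E).
  apply: (@leq_trans (size s)); last by rewrite /s /= size_cat !size_map; lia.
  apply: leq_trans (card_size s); rewrite card_sig; apply: subset_leq_card.
  apply/subsetP => v; rewrite !inE /keep => /or3P [/eqP ->|/eqP ->|/hasP [e he /orP [] /eqP <-]].
  + by rewrite eqxx.
  + by rewrite eqxx orbT.
  + by rewrite mem_cat (map_f fst he) !orbT.
  + by rewrite mem_cat (map_f snd he) !orbT.
- by rewrite !size_map.
move=> v hva hvb; rewrite /isolated negbK.
set w := enum_val v.
have hw : enum_rank w = v by rewrite /w enum_valK.
have wa : val w != a.
  apply: contraNneq hva => e; rewrite -hw; apply/eqP; congr enum_rank; exact: val_inj.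
have wb : val w != b.
  apply: contraNneq hvb => e; rewrite -hw; apply/eqP; congr enum_rank; exact: val_inj.
have := valP w; rewrite /keep (negbTE wa) (negbTE wb) /= => /hasP [e he hew].
apply/hasP; exists (enum_rank (projk e.1), enum_rank (projk e.2)).
  by rewrite /Ek /emap -map_comp; apply/mapP; exists e.
move: hew => /orP [] /eqP ew; apply/orP; [left|right]; rewrite /= -hw; apply/eqP;
  congr enum_rank; apply: val_inj; rewrite /= projkK ?(keep_e1 he) ?(keep_e2 he) //.
Qed.

End Iso.

Lemma hom_span (R : realType) (n d : nat) (V : finType) (E : seq (V * V)) (a b : V) :
  (#|V| <= n)%N -> (size E <= d)%N -> inspan d (@homV R n V E a b).
Proof.
move=> hV hE.
have h1 := @span_graph R n d _ (adm_Gk a b hV hE).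
have h2 := spanZ (#|{: {ffun Vn E a b -> 'I_n}}|)%:R h1.
apply: span_ext h2 => X _; by rewrite homV_keep homV_Gk.
Qed.

Section Kernel.
Variable V : finType.

Definition rep (T : eqType) (f : V -> T) (v : V) : V :=
  nth v (enum V) (find (fun u => f u == f v) (enum V)).

Lemma rep_has (T : eqType) (f : V -> T) v : has (fun u => f u == f v) (enum V).
Proof. by apply/hasP; exists v; rewrite ?mem_enum. Qed.

Lemma rep_f (T : eqType) (f : V -> T) v : f (rep f v) = f v.
Proof. by apply/eqP; exact: (nth_find v (rep_has f v)). Qed.

Lemma rep_eq (T : eqType) (f : V -> T) u v : f u = f v -> rep f u = rep f v.
Proof.
move=> e; rewrite /rep e; apply: set_nth_default.
by rewrite -has_find rep_has.
Qed.

Lemma rep_eqE (T : eqType) (f : V -> T) u v : (rep f u == rep f v) = (f u == f v).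
Proof.
apply/eqP/eqP => [e|e]; last exact: rep_eq.
by rewrite -(rep_f f u) -(rep_f f v) e.
Qed.

Lemma rep_ext (T T' : eqType) (f : V -> T) (f' : V -> T') v :
  (forall u, (f u == f v) = (f' u == f' v)) -> rep f v = rep f' v.
Proof. by move=> h; rewrite /rep (eq_find h). Qed.

Definition canon (k : {ffun V -> V}) : bool := [forall v, k v == rep k v].
Definition kfun (T : eqType) (f : V -> T) : {ffun V -> V} := [ffun v => rep f v].

Lemma canon_kfun (T : eqType) (f : V -> T) : canon (kfun f).
Proof.
apply/forallP => v; rewrite ffunE; apply/eqP; apply: rep_ext => u.
by rewrite !ffunE rep_eqE.
Qed.

Lemma canonP k : canon k -> forall v, k v = rep k v.
Proof. by move/forallP => h v; apply/eqP. Qed.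

Lemma canon_idem k : canon k -> forall v, k (k v) = k v.
Proof. by move=> ck v; rewrite {1}(canonP ck v) rep_f. Qed.

Definition Vq (k : {ffun V -> V}) := {x : V | x \in codom k}.
Definition kq (k : {ffun V -> V}) (v : V) : Vq k := exist _ (k v) (codom_f k v).

Lemma kq_val k (w : Vq k) : canon k -> kq k (val w) = w.
Proof.
move=> ck; apply: val_inj => /=; case: w => x /= /codomP [v ->].
exact: canon_idem.
Qed.

Definition idf : {ffun V -> V} := [ffun v => v].

Lemma canon_idf : canon idf.
Proof.
apply/forallP => v; rewrite /rep ffunE.
rewrite (eq_find (a2 := pred1 v)); last by move=> u; rewrite !ffunE.
by rewrite -/(index v (enum V)) nth_index ?mem_enum.
Qed.

Lemma card_Vq k : canon k -> k != idf -> (#|{: Vq k}| < #|V|)%N.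
Proof.
move=> ck nk.
have [v kv] : exists v, k v != v.
  apply/existsP; apply: contraR nk; rewrite negb_exists => /forallP h.
  by apply/eqP/ffunP => v; rewrite ffunE; apply/eqP; have := h v; rewrite negbK.
have vn : v \notin codom k.
  by apply: contra kv => /codomP [u ->]; rewrite canon_idem.
rewrite card_sig -(cardC [pred x | x \in codom k]) -[X in (X < _)%N]addn0 ltn_add2l.
by apply/card_gt0P; exists v; rewrite !inE.
Qed.

End Kernel.

Section Decomp.
Variable R : realType.
Variable n : nat.
Variable V : finType.

Lemma hom_decomp (E : seq (V * V)) (a b : V) (X : 'M[R]_n) :
  homV E a b X = \sum_(k : {ffun V -> V} | canon k) injV (emap (kq k) E) (kq k a) (kq k b) X.
Proof.
apply/matrixP => i j; rewrite summxE mxE.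
rewrite (partition_big (fun phi : {ffun V -> 'I_n} => kfun phi) (@canon V)) /=; last by move=> phi _; exact: canon_kfun.
apply: eq_bigr => k ck; rewrite mxE.
pose h (psi : {ffun Vq k -> 'I_n}) : {ffun V -> 'I_n} := [ffun v => psi (kq k v)].
pose g (phi : {ffun V -> 'I_n}) : {ffun Vq k -> 'I_n} := [ffun w => phi (val w)].
rewrite (reindex h); last first.
  exists g.
    by move=> psi _; apply/ffunP => w; rewrite !ffunE kq_val.
  move=> phi; rewrite inE => /andP [_ /eqP hk]; apply/ffunP => v.
  by rewrite !ffunE /= -hk ffunE rep_f.
apply: eq_big => [psi|psi _]; last first.
  by rewrite big_map; apply: eq_bigr => e _; rewrite !ffunE.
rewrite !ffunE andbC; congr (_ && _).
apply/eqP/injectiveP => [hk|inj].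
- move=> w1 w2 e12.
  rewrite -(kq_val w1 ck) -(kq_val w2 ck); congr (kq k _).
  have e1 : val w1 = k (val w1) by have := congr1 val (kq_val w1 ck).
  have e2 : val w2 = k (val w2) by have := congr1 val (kq_val w2 ck).
  have hx : h psi (val w1) = h psi (val w2) by rewrite !ffunE !kq_val.
  move: hx e1 e2; move: (val w1) (val w2) => x1 x2 hx e1 e2.
  by rewrite e1 e2 -hk !ffunE; apply: rep_eq.
- apply/ffunP => v; rewrite !ffunE (canonP ck v); apply: rep_ext => u.
  rewrite !ffunE (inj_eq inj); apply/eqP/eqP => [e|e]; last by apply: val_inj.
  exact: (congr1 val e).
Qed.

End Decomp.
Lemma inj_span (R : realType) (n d m : nat) :
  forall (V : finType) (E : seq (V * V)) (a b : V),
  (#|V| <= m)%N -> (size E <= d)%N -> inspan d (@injV R n V E a b).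
Proof.
elim: m => [|m ih] V E a b hV hE.
  have : (0 < #|V|)%N by apply/card_gt0P; exists a.
  by rewrite ltnNge hV.
have [hVn|hVn] := leqP #|V| n; last first.
  apply: (span_ext _ (@span0 R n d)) => X _; apply/matrixP => i k; rewrite !mxE.
  rewrite big_pred0 // => phi; apply/negbTE; apply/negP => /and3P [/injectiveP hi _ _].
  by have := @leq_card _ _ phi hi; rewrite card_ord leqNgt hVn.
pose F (X : 'M[R]_n) : 'M[R]_n := homV E a b X - \sum_(k : {ffun V -> V} | canon k && (k != idf V))
               injV (emap (kq k) E) (kq k a) (kq k b) X.
apply: (@span_ext _ n d F).
  move=> X _; rewrite /F hom_decomp (bigD1 (idf V)) ?canon_idf //= addrK.
  have c1 : cancel (kq (idf V)) val by move=> v; rewrite /= ffunE.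
  have c2 : cancel val (kq (idf V)) by move=> w; rewrite kq_val ?canon_idf.
  by rewrite -(injV_relabel c1 c2).
apply: spanB; first exact: hom_span.
apply: span_sum => k /andP [ck nk]; apply: ih; last by rewrite size_map.
by rewrite -ltnS; apply: leq_trans hV; exact: card_Vq.
Qed.
Section Final.
Variable R : realType.
Variable n : nat.

Lemma pactZ (g : 'S_n) (c : R) (A : 'M[R]_n) : pact g (c *: A) = c *: pact g A.
Proof. by apply/matrixP => i j; rewrite !mxE. Qed.

Lemma pact_sum (g : 'S_n) (I : Type) (r : seq I) (P : pred I) (F : I -> 'M[R]_n) :
  pact g (\sum_(i <- r | P i) F i) = \sum_(i <- r | P i) pact g (F i).
Proof.
apply/matrixP => i j; rewrite !mxE !summxE; apply: eq_bigr => x _; by rewrite mxE.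
Qed.

Lemma pactK (g : 'S_n) (A : 'M[R]_n) : pact g^-1 (pact g A) = A.
Proof. by apply/matrixP => i j; rewrite !mxE invgK !permK. Qed.

Lemma pact_sym (g : 'S_n) (A : 'M[R]_n) : symmat A -> symmat (pact g A).
Proof.
move=> sA; apply/matrixP => i j; rewrite !mxE.
by rewrite -{1}sA mxE.
Qed.

Lemma big_mxvec (T : Type) (idx : T) (op : Monoid.com_law idx) (F : 'I_(n * n) -> T) :
  \big[op/idx]_(t < n * n) F t = \big[op/idx]_(rs : 'I_n * 'I_n) F (mxvec_index rs.1 rs.2).
Proof.
rewrite (reindex (uncurry (@mxvec_index n n))) /=; last first.
  have [g hg1 hg2] := curry_mxvec_bij n n.
  by exists g => x _; [apply: hg1 | apply: hg2].
by apply: eq_bigr => -[r s].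
Qed.

Definition Em (m : 'X_{1.. n * n}) : seq ('I_n * 'I_n) :=
  flatten [seq nseq (m (mxvec_index rs.1 rs.2)) rs | rs <- enum {: 'I_n * 'I_n}].

Lemma prod_nseq (T : Type) (k : nat) (x : T) (F : T -> R) :
  \prod_(y <- nseq k x) F y = F x ^+ k.
Proof. by elim: k => [|k ih]; rewrite ?big_nil ?expr0 // big_cons ih exprS. Qed.

Lemma mon_Em (m : 'X_{1.. n * n}) (Y : 'M[R]_n) :
  \prod_(t < n * n) (mxvec Y 0 t) ^+ (m t) = \prod_(e <- Em m) Y e.1 e.2.
Proof.
rewrite big_mxvec /Em big_flatten /= big_map big_enum /=.
by apply: eq_bigr => rs _; rewrite prod_nseq mxvecE.
Qed.

Lemma size_Em (m : 'X_{1.. n * n}) : size (Em m) = mdeg m.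
Proof.
rewrite /Em size_flatten /shape -map_comp mdegE.
rewrite (big_mxvec (Monoid.ComLaw.clone _ _ addn _) (fun t => m t)).
rewrite sumnE big_map big_enum /=; apply: eq_bigr => rs _; by rewrite /= size_nseq.
Qed.


Lemma T_inj (m : 'X_{1.. n * n}) (i k : 'I_n) (X : 'M[R]_n) :
  \sum_(g : 'S_n) (\prod_(t < n * n) (mxvec (pact g X) 0 t) ^+ m t) *: pact g^-1 (delta_mx i k)
  = injV (Em m) i k X.
Proof.
apply/matrixP => p q; rewrite summxE mxE.
rewrite (eq_bigr (fun g : 'S_n => if (g p == i) && (g q == k) then
     \prod_(e <- Em m) X ((g^-1)%g e.1) ((g^-1)%g e.2) else 0)); last first.
  move=> g _; rewrite !mxE invgK mon_Em.
  rewrite (eq_bigr (fun e => X ((g^-1)%g e.1) ((g^-1)%g e.2))); last by move=> e _; rewrite mxE.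
  by case: ifP; rewrite ?mulr1 ?mulr0.
rewrite -big_mkcond /=.
pose h (g : 'S_n) : {ffun 'I_n -> 'I_n} := [ffun v => (g^-1)%g v].
pose h' (phi : {ffun 'I_n -> 'I_n}) : 'S_n := ((insubd (1%g : 'S_n) phi : 'S_n)^-1)%g.
have pv : forall (s : 'S_n) v, val s v = s v by move=> s v; rewrite -pvalE.
rewrite [RHS](reindex h); last first.
  exists h'.
    move=> g; rewrite inE => /and3P [ih _ _]; rewrite /h'.
    have -> : insubd (1%g : 'S_n) (h g) = (g^-1)%g.
      by apply: val_inj; rewrite insubdK //; apply/ffunP => v; rewrite ffunE pv.
    by rewrite invgK.
  move=> phi; rewrite inE => /and3P [ih _ _]; apply/ffunP => v.
  by rewrite ffunE /h' invgK -pv insubdK.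
apply: eq_big => [g|g _]; last by apply: eq_bigr => e _; rewrite !ffunE.
rewrite !ffunE.
have -> : injectiveb (h g).
  by apply/injectiveP => x y; rewrite !ffunE; exact: perm_inj.
have e : forall x y, (g x == y) = ((g^-1)%g y == x).
  by move=> x y; rewrite -[RHS](inj_eq (@perm_inj _ g)) permKV eq_sym.
by rewrite /= !e.
Qed.

End Final.

Lemma span_f (R : realType) (n d : nat) (f : 'M[R]_n -> 'M[R]_n) :
  equivariant f -> polymap_le d f -> inspan d f.
Proof.
move=> eqf pf.
have [P hP] : exists P : 'I_n * 'I_n -> mpoly.mpoly (n * n) R, forall ij,
    (msize (P ij) <= d.+1)%N /\ forall X : 'M[R]_n, symmat X ->
      f X ij.1 ij.2 = mpoly.meval (fun t : 'I_(n * n) => mxvec X 0 t) (P ij).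
  apply: (@fin_all_exists _ (fun _ => mpoly.mpoly (n * n) R) (fun ij p =>
    (msize p <= d.+1)%N /\ forall X : 'M[R]_n, symmat X ->
      f X ij.1 ij.2 = mpoly.meval (fun t : 'I_(n * n) => mxvec X 0 t) p)).
  by move=> ij; exact: pf ij.1 ij.2.
pose c0 : R := (n`!%:R)^-1.
pose G (X : 'M[R]_n) : 'M[R]_n := c0 *: \sum_(i < n) \sum_(j < n)
   \sum_(m <- msupp (P (i, j)) | m \in msupp (P (i, j))) (P (i, j))@_m *: injV (Em m) i j X.
apply: (@span_ext R n d G).
  move=> X sX.
  have avg : f X = c0 *: \sum_(g : 'S_n) pact g^-1 (f (pact g X)).
    rewrite (eq_bigr (fun _ => f X)) => [|g _]; last by rewrite eqf // pactK.
    rewrite sumr_const card_Sn -scaler_nat scalerA mulVf ?scale1r //.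
    by rewrite pnatr_eq0 -lt0n fact_gt0.
  rewrite avg /G; congr (_ *: _).
  under eq_bigr => i _ do under eq_bigr => j _ do rewrite -big_seq; rewrite /=.
  under eq_bigr => i _ do under eq_bigr => j _ do under eq_bigr => m _ do
    rewrite -T_inj scaler_sumr.
  rewrite /=.
  under eq_bigr => i _ do under eq_bigr => j _ do rewrite exchange_big.
  under eq_bigr => i _ do rewrite exchange_big.
  rewrite exchange_big /=; apply: eq_bigr => g _.
  rewrite {1}(matrix_sum_delta (f (pact g X))) pact_sum; apply: eq_bigr => i _.
  rewrite pact_sum; apply: eq_bigr => j _.
  rewrite pactZ (proj2 (hP (i, j)) _ (pact_sym g sX)) mevalE scaler_suml.
  by apply: eq_bigr => m _; rewrite scalerA.
apply: spanZ; apply: span_sum => i _; apply: span_sum => j _; apply: span_sum => m hm.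
apply: spanZ; apply: (@inj_span R n d #|'I_n|) => //.
rewrite size_Em -ltnS; apply: leq_trans (proj1 (hP (i, j))).
exact: msize_mdeg_lt.
Qed.


Theorem mainTheorem3 (R : realType) (n d : nat) : (0 < n)%N ->
  (* each P_H (H admissible) is an equivariant polynomial map of degree <= d *)
  (forall H : graph, admissible n d H ->
     @equivariant R n (Pmap H) /\ @polymap_le R n d (Pmap H)) /\
  (* P_H does not depend on the orientation of the edges *)
  (forall (m : nat) (E1 E2 : seq ('I_m * 'I_m)) (a b : 'I_m),
     (forall r s : 'I_m, count (und_eq r s) E1 = count (und_eq r s) E2) ->
     forall X : 'M[R]_n, symmat X ->
       Pmap (Graph E1 a b) X = Pmap (Graph E2 a b) X) /\
  (* spanning *)
  (forall f : 'M[R]_n -> 'M[R]_n, equivariant f -> polymap_le d f ->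
     exists (k : nat) (G : 'I_k -> graph) (c : 'I_k -> R),
       (forall i, admissible n d (G i)) /\
       forall X : 'M[R]_n, symmat X ->
         f X = \sum_(i < k) c i *: Pmap (G i) X) /\
  (* linear independence of the P_H over pairwise non-isomorphic H *)
  (forall (k : nat) (G : 'I_k -> graph) (c : 'I_k -> R),
     (forall i, admissible n d (G i)) ->
     (forall i j, i != j -> ~ giso (G i) (G j)) ->
     (forall X : 'M[R]_n, symmat X -> \sum_(i < k) c i *: Pmap (G i) X = 0) ->
     forall i, c i = 0).
Proof.
move=> n0; split; [|split; [|split]].
- move=> H [hm hE hiso]; split; [exact: Pmap_equiv | exact: Pmap_poly].
- exact: Pmap_orient.
- move=> f ef pf; exact: (span_f ef pf).
- exact: indep.
Qed.
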